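(* Let $F$ be a field. If $M$ and $M'$ are nonzero Puiseux monoids such that $F[M]$ and $F[M']$ are both half-factorial, then $F[M]\cong F[M']\cong F[X]$ as $F$-algebras.
   Context: A Puiseux monoid is an additive submonoid of $(\mathbb{Q}_{\ge 0},+)$. $F[M]$ denotes the semigroup algebra of $M$ over $F$ (finite formal sums $\sum_{s\in M} f(s)X^s$ with $X^sX^t=X^{s+t}$). An integral domain is half-factorial if it is atomic (every nonzero nonunit is a finite product of irreducibles) and any two such factorizations of the same element have the same number of factors. *)

(* Defs.v *)
From HB Require Import structures.
From mathcomp Require Import all_boot all_order all_algebra.
From Stdlib Require List.
Set Implicit Arguments. Unset Strict Implicit. Unset Printing Implicit Defensive.
Import Order.TTheory GRing.Theory Num.Theory.
Local Open Scope ring_scope.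

Definition puiseux_monoid (M : rat -> Prop) : Prop :=
  [/\ M 0, (forall a b, M a -> M b -> M (a + b)) & (forall a, M a -> 0 <= a)].

Definition nontrivial_monoid (M : rat -> Prop) : Prop := exists a, M a /\ a != 0.

Section Factorization.
Variables (T : Type) (P : T -> Prop) (mul : T -> T -> T) (one zero : T).

Definition is_unit (u : T) : Prop := P u /\ exists v, P v /\ mul u v = one.

Definition is_irreducible (a : T) : Prop :=
  [/\ P a, a <> zero, ~ is_unit a &
      forall b c, P b -> P c -> a = mul b c -> is_unit b \/ is_unit c].

Definition prodl (l : seq T) : T := foldr mul one l.

Definition atomic : Prop :=
  forall a, P a -> a <> zero -> ~ is_unit a ->
    exists l : seq T, (forall x, List.In x l -> is_irreducible x) /\ a = prodl l.

Definition half_factorial : Prop :=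
  atomic /\
  forall l1 l2 : seq T,
    (forall x, List.In x l1 -> is_irreducible x) ->
    (forall x, List.In x l2 -> is_irreducible x) ->
    prodl l1 = prodl l2 -> size l1 = size l2.
End Factorization.

(** The monoid algebra F[Q_{>=0}]-style representation: an element
    sum_q f(q) X^q is represented by its canonical term list: the list of pairs
    (q, f q) over the support of f, sorted by strictly increasing exponent, all
    coefficients nonzero. *)
Section MonoidAlgebra.
Variable F : fieldType.

Definition coefs (s : seq (rat * F)) (q : rat) : F :=
  \sum_(x <- s | x.1 == q) x.2.

Definition expos (s : seq (rat * F)) : seq rat :=
  sort (fun x y : rat => x <= y) (undup (map fst s)).

Definition normalize (s : seq (rat * F)) : seq (rat * F) :=
  [seq (q, coefs s q) | q <- [seq q <- expos s | coefs s q != 0]].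

Definition canonical_terms (s : seq (rat * F)) : bool := normalize s == s.

Definition in_alg (M : rat -> Prop) (s : seq (rat * F)) : Prop :=
  canonical_terms s /\ (forall x, x \in s -> M x.1).

Definition ma_zero : seq (rat * F) := [::].
Definition ma_one : seq (rat * F) := [:: (0, 1)].
Definition ma_add (s t : seq (rat * F)) := normalize (s ++ t).
Definition ma_mul (s t : seq (rat * F)) :=
  normalize [seq (a.1 + b.1, a.2 * b.2) | a <- s, b <- t].
Definition ma_scale (c : F) (s : seq (rat * F)) :=
  normalize [seq (x.1, c * x.2) | x <- s].

Definition alg_half_factorial (M : rat -> Prop) : Prop :=
  half_factorial (in_alg M) ma_mul ma_one ma_zero.

Definition poly_iso (M : rat -> Prop) (phi : {poly F} -> seq (rat * F)) : Prop :=
  (forall p, in_alg M (phi p)) /\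
  injective phi /\
  (forall s, in_alg M s -> exists p, phi p = s) /\
  (forall p q, phi (p + q) = ma_add (phi p) (phi q)) /\
  (forall p q, phi (p * q) = ma_mul (phi p) (phi q)) /\
  phi 1 = ma_one /\
  (forall (c : F) p, phi (c *: p) = ma_scale c (phi p)).

Definition alg_iso (M M' : rat -> Prop) (psi : seq (rat * F) -> seq (rat * F)) : Prop :=
  (forall s, in_alg M s -> in_alg M' (psi s)) /\
  (forall s t, in_alg M s -> in_alg M t -> psi s = psi t -> s = t) /\
  (forall t, in_alg M' t -> exists s, in_alg M s /\ psi s = t) /\
  (forall s t, in_alg M s -> in_alg M t -> psi (ma_add s t) = ma_add (psi s) (psi t)) /\
  (forall s t, in_alg M s -> in_alg M t -> psi (ma_mul s t) = ma_mul (psi s) (psi t)) /\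
  psi ma_one = ma_one /\
  (forall (c : F) s, in_alg M s -> psi (ma_scale c s) = ma_scale c (psi s)).
End MonoidAlgebra.

(* Main.v *)
Require Import Defs.
From HB Require Import structures.
From mathcomp Require Import all_boot all_order all_algebra.
From mathcomp Require Import ring lra.
From Stdlib Require Import Classical.
Set Implicit Arguments. Unset Strict Implicit. Unset Printing Implicit Defensive.
Import Order.TTheory GRing.Theory Num.Theory.
Local Open Scope ring_scope.

Section Norm.
Variable F : fieldType.
Implicit Types s t : seq (rat * F).

Definition supp s := [seq q <- expos s | coefs s q != 0].

Lemma coefs_notin s q : q \notin map fst s -> coefs s q = 0.
Proof.
move=> H; rewrite /coefs big_seq_cond big1 // => x /andP[xs /eqP xq].
by case/negP: H; rewrite -xq; apply: map_f.
Qed.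

Lemma mem_supp s q : (q \in supp s) = (coefs s q != 0).
Proof.
rewrite mem_filter /expos mem_sort mem_undup.
case: (boolP (coefs s q != 0)) => //= H.
by apply: contraR H => H'; rewrite coefs_notin ?eqxx.
Qed.

Lemma supp_uniq s : uniq (supp s).
Proof. by rewrite filter_uniq // sort_uniq undup_uniq. Qed.

Lemma supp_sorted s : sorted <=%R (supp s).
Proof.
apply: sorted_filter; first exact: le_trans.
apply: sort_sorted; exact: le_total.
Qed.

Lemma sum_pred1 (T : eqType) (r : seq T) (k : T) (G : T -> F) :
  uniq r -> \sum_(i <- r | i == k) G i = if k \in r then G k else 0.
Proof.
elim: r => [|x r IH] /=; first by rewrite big_nil.
case/andP=> xr ur; rewrite big_cons IH // in_cons.
case: (eqVneq x k) => [<-|xk] /=.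
    by rewrite (negbTE xr) addr0.
by [].
Qed.

Lemma normE s : normalize s = [seq (q, coefs s q) | q <- supp s].
Proof. by []. Qed.

Lemma coefs_norm s q : coefs (normalize s) q = coefs s q.
Proof.
rewrite normE {1}/coefs big_map /= sum_pred1 ?supp_uniq // mem_supp.
by case: eqP.
Qed.

Lemma norm_eq s t : coefs s =1 coefs t -> normalize s = normalize t.
Proof.
move=> H; rewrite !normE.
have -> : supp s = supp t.
  apply: (sorted_eq le_trans le_anti); rewrite ?supp_sorted //.
  apply: uniq_perm; rewrite ?supp_uniq // => q; by rewrite !mem_supp H.
by apply: eq_map => q; rewrite H.
Qed.

Lemma canonE s : canonical_terms s <-> normalize s = s.
Proof. by rewrite /canonical_terms; split => [/eqP|->]. Qed.

Lemma canon_norm s : canonical_terms (normalize s).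
Proof. apply/canonE; apply: norm_eq => q; exact: coefs_norm. Qed.

Lemma canon_eq s t : canonical_terms s -> canonical_terms t ->
  coefs s =1 coefs t -> s = t.
Proof.
move=> cs ct H; have [e1 e2] : normalize s = s /\ normalize t = t.
  by split; apply/canonE.
by rewrite -e1 -e2; exact: norm_eq.
Qed.

Lemma canon_sorted s : canonical_terms s -> sorted <%R (map fst s).
Proof.
move/canonE <-; rewrite normE -map_comp map_id_in //.
by rewrite lt_sorted_uniq_le supp_uniq supp_sorted.
Qed.

Lemma canon_uniq s : canonical_terms s -> uniq (map fst s).
Proof. by move/canon_sorted/lt_sorted_uniq. Qed.

Lemma coefs_mem s x : uniq (map fst s) -> x \in s -> coefs s x.1 = x.2.
Proof.
elim: s => [|y r IH] //= /andP[yr ur]; rewrite in_cons /coefs big_cons -/(coefs r _).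
case/orP=> [/eqP->|xr]; first by rewrite eqxx coefs_notin ?addr0.
have -> : (y.1 == x.1) = false.
  by apply/negP => /eqP e; case/negP: yr; rewrite e map_f.
by rewrite IH.
Qed.

Lemma canon_nz s x : canonical_terms s -> x \in s -> x.2 != 0.
Proof.
move=> cs; rewrite -{1}((canonE s).1 cs) normE => /mapP[q]; rewrite mem_supp => h ->.
by [].
Qed.

Lemma canonI s : sorted <%R (map fst s) -> (forall x, x \in s -> x.2 != 0) ->
  canonical_terms s.
Proof.
move=> ss nz; apply/canonE; rewrite normE.
have us : uniq (map fst s) by apply: lt_sorted_uniq.
have -> : supp s = map fst s.
  apply: (sorted_eq le_trans le_anti); rewrite ?supp_sorted //.
    by move: ss; rewrite lt_sorted_uniq_le => /andP[].
  apply: uniq_perm; rewrite ?supp_uniq // => q; rewrite mem_supp.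
  case: (boolP (q \in map fst s)) => [/mapP[x xs ->]|qn].
    by rewrite coefs_mem // nz.
  by rewrite coefs_notin ?eqxx.
rewrite -map_comp; transitivity (map id s); last exact: map_id. apply/eq_in_map => x xs /=.
by rewrite coefs_mem //; case: x {xs}.
Qed.

Lemma canon_coefs s x : canonical_terms s -> x \in s -> coefs s x.1 = x.2.
Proof. by move/canon_uniq; apply: coefs_mem. Qed.


Definition allp s t := [seq (a.1 + b.1, a.2 * b.2) | a <- s, b <- t].

Lemma coefs_cat s t q : coefs (s ++ t) q = coefs s q + coefs t q.
Proof. by rewrite /coefs big_cat. Qed.

Lemma coefs_add s t q : coefs (ma_add s t) q = coefs s q + coefs t q.
Proof. by rewrite /ma_add coefs_norm coefs_cat. Qed.

Lemma coefs_allp_r s t q :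
  coefs (allp s t) q = \sum_(x <- s) x.2 * coefs t (q - x.1).
Proof.
rewrite {1}/coefs big_mkcond /allp big_allpairs_dep /=.
apply: eq_bigr => x _; rewrite /coefs mulr_sumr [RHS]big_mkcond.
apply: eq_bigr => y _ /=.
have -> : (y.1 == q - x.1) = (x.1 + y.1 == q).
  by apply/eqP/eqP => e; [rewrite e; ring | rewrite -e; ring].
by case: eqP => _; rewrite ?mulr0.
Qed.

Lemma coefs_allp_l s t q :
  coefs (allp s t) q = \sum_(y <- t) coefs s (q - y.1) * y.2.
Proof.
rewrite {1}/coefs big_mkcond /allp big_allpairs_dep /= exchange_big /=.
apply: eq_bigr => y _; rewrite /coefs mulr_suml [RHS]big_mkcond.
apply: eq_bigr => x _ /=.
have -> : (x.1 == q - y.1) = (x.1 + y.1 == q).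
  by apply/eqP/eqP => e; [rewrite e; ring | rewrite -e; ring].
by case: eqP => _; rewrite ?mul0r.
Qed.

Lemma coefs_mul s t q :
  coefs (ma_mul s t) q = \sum_(x <- s) x.2 * coefs t (q - x.1).
Proof. by rewrite /ma_mul coefs_norm -/(allp s t) coefs_allp_r. Qed.

Lemma mul_norml s t : ma_mul (normalize s) t = ma_mul s t.
Proof.
apply: norm_eq => q; rewrite -!/(allp _ _) !coefs_allp_l.
by apply: eq_bigr => y _; rewrite coefs_norm.
Qed.

Lemma mul_normr s t : ma_mul s (normalize t) = ma_mul s t.
Proof.
apply: norm_eq => q; rewrite -!/(allp _ _) !coefs_allp_r.
by apply: eq_bigr => y _; rewrite coefs_norm.
Qed.

Lemma coefs_scale c s q : coefs (ma_scale c s) q = c * coefs s q.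
Proof.
rewrite /ma_scale coefs_norm /coefs big_map mulr_sumr.
by apply: eq_bigr.
Qed.

Lemma coefs_mono e (c : F) q : coefs [:: (e, c)] q = if e == q then c else 0.
Proof. by rewrite /coefs big_cons big_nil /=; case: eqP; rewrite ?addr0. Qed.

Lemma canon_mono e (c : F) : c != 0 -> canonical_terms [:: (e, c)].
Proof.
move=> c0; apply: canonI => //= x; rewrite inE => /eqP -> //.
Qed.

Lemma canon_one : canonical_terms (ma_one F).
Proof. apply: canon_mono; exact: oner_neq0. Qed.

Lemma mul_mono e1 (c1 : F) e2 c2 : c1 * c2 != 0 ->
  ma_mul [:: (e1, c1)] [:: (e2, c2)] = [:: (e1 + e2, c1 * c2)].
Proof.
move=> nz; apply: canon_eq; [exact: canon_norm | exact: canon_mono|] => q.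
rewrite coefs_mul big_cons big_nil addr0 /= !coefs_mono.
have -> : (e2 == q - e1) = (e1 + e2 == q).
  by apply/eqP/eqP => e; [rewrite e; ring | rewrite -e; ring].
by case: eqP; rewrite ?mulr0.
Qed.

Definition smap (c : rat) s := [seq (x.1 * c, x.2) | x <- s].

Lemma coefs_smap c s r : c != 0 -> coefs (smap c s) r = coefs s (r / c).
Proof.
move=> c0; rewrite /coefs big_map /=; apply: eq_bigl => x /=.
by apply/eqP/eqP => e; [rewrite -e mulfK | rewrite e divfK].
Qed.

Lemma canon_smap c s : 0 < c -> canonical_terms s -> canonical_terms (smap c s).
Proof.
move=> c0 cs; apply: canonI.
  rewrite /smap -map_comp.
  have -> : (fst \o (fun x : rat * F => (x.1 * c, x.2))) = (fun x => x * c) \o fst by [].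
  rewrite map_comp; move: (canon_sorted cs); elim: (map fst s) => //= a l IH.
  elim: l a IH => //= b l _ a IH /andP[ab H]; apply/andP; split.
    by rewrite ltr_pM2r.
  exact: IH.
by move=> x /mapP[y ys ->] /=; exact: (canon_nz cs ys).
Qed.

Lemma smap_norm c s : 0 < c -> smap c (normalize s) = normalize (smap c s).
Proof.
move=> c0; have c0' : c != 0 by rewrite gt_eqF.
apply: canon_eq; [apply: canon_smap => //; exact: canon_norm| exact: canon_norm|] => r.
by rewrite coefs_norm !coefs_smap // coefs_norm.
Qed.

Lemma smap_add c s t : 0 < c -> smap c (ma_add s t) = ma_add (smap c s) (smap c t).
Proof.
move=> c0; rewrite /ma_add smap_norm //; congr normalize; by rewrite /smap map_cat.
Qed.

Lemma smap_scale c d s : 0 < c -> smap c (ma_scale d s) = ma_scale d (smap c s).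
Proof.
move=> c0; rewrite /ma_scale smap_norm //; congr normalize; by rewrite /smap -!map_comp.
Qed.

Lemma smap_one c : smap c (ma_one F) = ma_one F.
Proof. by rewrite /smap /ma_one /= mul0r. Qed.

Lemma smap_mul c s t : 0 < c -> smap c (ma_mul s t) = ma_mul (smap c s) (smap c t).
Proof.
move=> c0; have c0' : c != 0 by rewrite gt_eqF.
apply: canon_eq; [apply: canon_smap => //; exact: canon_norm| exact: canon_norm|] => r.
rewrite coefs_smap // !coefs_mul /smap big_map /=.
apply: eq_bigr => x _; rewrite coefs_smap //; congr (_ * coefs _ _).
by rewrite mulrBl mulfK.
Qed.

Lemma smap_inj c s t : c != 0 -> canonical_terms s -> canonical_terms t ->
  smap c s = smap c t -> s = t.
Proof.
move=> c0 cs ct e; apply: canon_eq => // q.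
by rewrite -[q](mulfK c0) -!coefs_smap // e.
Qed.

Lemma smapK c s : c != 0 -> smap c (smap c^-1 s) = s.
Proof.
move=> c0; rewrite /smap -map_comp -[RHS]map_id; apply: eq_map => -[x y] /=.
by rewrite mulfVK.
Qed.

Lemma smap_comp c d s : smap c (smap d s) = smap (d * c) s.
Proof. by rewrite /smap -map_comp; apply: eq_map => x /=; rewrite mulrA. Qed.

End Norm.

Section Poly.
Variable F : fieldType.
Implicit Types s t : seq (rat * F).
Implicit Types p q : {poly F}.

Definition isnat (r : rat) := exists k : nat, r = k%:R.

Definition LL (N : nat) p : seq (rat * F) := [seq ((i%:R : rat), p`_i) | i <- iota 0 N].
Definition phi1 p := normalize (LL (size p) p).

Lemma coefs_LL N p k : (size p <= N)%N -> coefs (LL N p) k%:R = p`_k.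
Proof.
move=> sN; rewrite /coefs big_map /=.
rewrite (eq_bigl (fun i => i == k)); last by move=> i /=; rewrite eqr_nat.
rewrite sum_pred1 ?iota_uniq // mem_iota /= add0n.
case: ltnP => // kN; rewrite nth_default //; exact: leq_trans kN.
Qed.

Lemma coefs_nonnat s r : (forall x, x \in s -> isnat x.1) -> ~ isnat r -> coefs s r = 0.
Proof.
move=> H nr; apply: coefs_notin; apply/negP => /mapP[x xs e].
by apply: nr; rewrite e; apply: H.
Qed.

Lemma LL_nat N p x : x \in LL N p -> isnat x.1.
Proof. by move=> /mapP[i _ ->]; exists i. Qed.

Lemma coefs_LL_nn N p r : ~ isnat r -> coefs (LL N p) r = 0.
Proof. apply: coefs_nonnat; exact: LL_nat. Qed.

Lemma coefs_phi1 p k : coefs (phi1 p) k%:R = p`_k.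
Proof. by rewrite coefs_norm coefs_LL. Qed.

Lemma coefs_phi1_nn p r : ~ isnat r -> coefs (phi1 p) r = 0.
Proof. by move=> h; rewrite coefs_norm coefs_LL_nn. Qed.

Lemma canon_phi1 p : canonical_terms (phi1 p).
Proof. exact: canon_norm. Qed.

Lemma phi1_ext p s : canonical_terms s ->
  (forall k : nat, coefs s k%:R = p`_k) -> (forall r, ~ isnat r -> coefs s r = 0) ->
  phi1 p = s.
Proof.
move=> cs H1 H2; apply: canon_eq; [exact: canon_phi1| exact: cs|] => r.
have [[k ->]|nr] := classic (isnat r).
  by rewrite coefs_phi1 H1.
by rewrite coefs_phi1_nn // H2.
Qed.

Lemma phi1_add p q : phi1 (p + q) = ma_add (phi1 p) (phi1 q).
Proof.
apply: phi1_ext; first exact: canon_norm.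
  by move=> k; rewrite coefs_add !coefs_phi1 coefD.
by move=> r nr; rewrite coefs_add !coefs_phi1_nn // addr0.
Qed.

Lemma phi1_scale c p : phi1 (c *: p) = ma_scale c (phi1 p).
Proof.
apply: phi1_ext; first exact: canon_norm.
  by move=> k; rewrite coefs_scale !coefs_phi1 coefZ.
by move=> r nr; rewrite coefs_scale !coefs_phi1_nn // mulr0.
Qed.

Lemma phi1_one : phi1 1 = ma_one F.
Proof.
apply: phi1_ext; first exact: canon_one.
  move=> k; rewrite coefs_mono coef1 eq_sym.
  by rewrite -[0 : rat]/(0%N%:R) eqr_nat; case: (k == 0%N).
move=> r nr; rewrite coefs_mono; case: eqP => // e.
by case: nr; exists 0%N; rewrite -e.
Qed.

Lemma sum_iota_ext (G : nat -> F) n m : (n <= m)%N ->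
  (forall i, (n <= i)%N -> G i = 0) ->
  \sum_(i <- iota 0 n) G i = \sum_(i <- iota 0 m) G i.
Proof.
move=> nm H; rewrite -(subnKC nm) iotaD big_cat /= add0n.
have -> : \sum_(i <- iota n (m - n)) G i = 0.
  rewrite big_seq big1 // => i; rewrite mem_iota => /andP[h _]; exact: H.
by rewrite addr0.
Qed.

Lemma phi1_mul p q : phi1 (p * q) = ma_mul (phi1 p) (phi1 q).
Proof.
apply: phi1_ext; first exact: canon_norm.
  move=> k; rewrite /phi1 mul_norml mul_normr /ma_mul coefs_norm -/(allp _ _).
  rewrite coefs_allp_r /LL big_map /= coefM.
  have -> : \sum_(j < k.+1) p`_j * q`_(k - j) =
     \sum_(i <- iota 0 k.+1) (if (i <= k)%N then p`_i * q`_(k - i) else 0).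
    rewrite -(big_mkord xpredT (fun j => p`_j * q`_(k - j))) /index_iota subn0.
    by rewrite big_seq_cond [RHS]big_seq_cond; apply: eq_bigr => i;
      rewrite mem_iota /= add0n ltnS => /andP[->].
  rewrite (@sum_iota_ext _ (size p) (size p + k.+1)) ?leq_addr //; last first.
    by move=> i h; rewrite nth_default // mul0r.
  rewrite [RHS](@sum_iota_ext _ k.+1 (size p + k.+1)) ?leq_addl //; last first.
    by move=> i h; case: leqP => // ik; move: h; rewrite ltnNge ik.
  apply: eq_bigr => i _; case: leqP => ik.
    rewrite -natrB // coefs_LL //.
  rewrite coefs_LL_nn ?mulr0 // => -[j e].
  have : (k%:R - i%:R : rat) < 0 by rewrite subr_lt0 ltr_nat.
  by rewrite e ltrn0.
move=> r nr.
rewrite coefs_mul big1_seq // => x /andP[_ xs]; rewrite coefs_phi1_nn ?mulr0 //.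
move: xs; rewrite /phi1 normE => /mapP[u]; rewrite mem_supp => hu ->.
have [[i ->]|nu] := classic (isnat u); last by rewrite coefs_LL_nn ?eqxx in hu.
move=> [j e]; apply: nr; exists (i + j)%N; by rewrite natrD -e /=; ring.
Qed.

Lemma phi1_inj p q : phi1 p = phi1 q -> p = q.
Proof. move=> e; apply/polyP => k; by rewrite -!coefs_phi1 e. Qed.

Lemma phi1_surj s : canonical_terms s -> (forall x, x \in s -> isnat x.1) ->
  exists p, phi1 p = s.
Proof.
move=> cs Hs.
have [N HN] : exists N : nat, forall k : nat, (N <= k)%N -> (k%:R : rat) \notin map fst s.
  elim: s {cs} Hs => [|y r IH] Hs; first by exists 0%N.
  have [N HN] := IH (fun x xr => Hs x (@mem_behead _ (y :: r) x xr)).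
  have [j ej] := Hs y (mem_head _ _).
  exists (maxn N j.+1) => k; rewrite geq_max => /andP[h1 h2] /=.
  rewrite in_cons negb_or HN // andbT ej eqr_nat.
  by apply/eqP => e; rewrite e ltnn in h2.
exists (\poly_(i < N) coefs s i%:R); apply: phi1_ext => //.
  move=> k; rewrite coef_poly; case: ltnP => // kN.
  by rewrite coefs_notin // HN.
by move=> r nr; apply: coefs_nonnat.
Qed.

End Poly.

Section Struct.
Variable F : fieldType.
Implicit Types s t : seq (rat * F).

Lemma ext_min (l : seq rat) : l != [::] -> exists2 lo, lo \in l & forall y, y \in l -> lo <= y.
Proof.
elim: l => // x [|z r] IH _.
  by exists x; rewrite ?mem_head // => y; rewrite inE => /eqP ->.
have [lo lin H] := IH isT.
case: (leP x lo) => h.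
  exists x; first exact: mem_head.
  by move=> y; rewrite inE => /orP[/eqP -> //|/H]; apply: le_trans.
exists lo; first by rewrite inE lin orbT.
by move=> y; rewrite inE => /orP[/eqP ->|/H//]; apply: ltW.
Qed.

Lemma ext_max (l : seq rat) : l != [::] -> exists2 hi, hi \in l & forall y, y \in l -> y <= hi.
Proof.
elim: l => // x [|z r] IH _.
  by exists x; rewrite ?mem_head // => y; rewrite inE => /eqP ->.
have [lo lin H] := IH isT.
case: (leP lo x) => h.
  exists x; first exact: mem_head.
  by move=> y; rewrite inE => /orP[/eqP -> //|/H] => h'; apply: le_trans h.
exists lo; first by rewrite inE lin orbT.
by move=> y; rewrite inE => /orP[/eqP ->|/H//]; apply: ltW.
Qed.

Lemma coef_nz s e : canonical_terms s -> e \in map fst s -> coefs s e != 0.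
Proof.
move=> cs /mapP[x xs ->]; rewrite canon_coefs //; exact: canon_nz cs xs.
Qed.

Lemma coef_lo s t lo1 lo2 : canonical_terms s -> canonical_terms t ->
  (forall y, y \in map fst s -> lo1 <= y) -> (forall y, y \in map fst t -> lo2 <= y) ->
  coefs (ma_mul s t) (lo1 + lo2) = coefs s lo1 * coefs t lo2.
Proof.
move=> cs ct H1 H2; rewrite coefs_mul {2}/coefs big_distrl [RHS]big_mkcond /=.
rewrite big_seq [RHS]big_seq; apply: eq_bigr => x xs.
have := H1 _ (map_f fst xs); rewrite le_eqVlt => /orP[/eqP e|lt].
  by rewrite -e eqxx /=; congr (_ * coefs _ _); ring.
rewrite (gt_eqF lt) coefs_notin ?mulr0 //.
apply/negP => /H2; rewrite leNgt => /negP; apply; lra.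
Qed.

Lemma coef_hi s t lo1 lo2 : canonical_terms s -> canonical_terms t ->
  (forall y, y \in map fst s -> y <= lo1) -> (forall y, y \in map fst t -> y <= lo2) ->
  coefs (ma_mul s t) (lo1 + lo2) = coefs s lo1 * coefs t lo2.
Proof.
move=> cs ct H1 H2; rewrite coefs_mul {2}/coefs big_distrl [RHS]big_mkcond /=.
rewrite big_seq [RHS]big_seq; apply: eq_bigr => x xs.
have := H1 _ (map_f fst xs); rewrite le_eqVlt => /orP[/eqP e|lt].
  by rewrite e eqxx /=; congr (_ * coefs _ _); ring.
rewrite (lt_eqF lt) coefs_notin ?mulr0 //.
apply/negP => /H2; rewrite leNgt => /negP; apply; lra.
Qed.

Lemma mono_of s e0 : canonical_terms s -> s != [::] ->
  (forall y, y \in map fst s -> y = e0) -> s = [:: (e0, coefs s e0)].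
Proof.
move=> cs; case: s cs => // x [|z r] cs _ H.
  by rewrite -(H x.1 (mem_head _ _)) canon_coefs ?mem_head //; case: x {H cs}.
have := canon_uniq cs; rewrite /= inE negb_or => /andP[/andP[/eqP[]]].
by rewrite (H x.1) ?mem_head // (H z.1) // !inE eqxx orbT.
Qed.

Lemma mulU s t e c : canonical_terms s -> canonical_terms t ->
  ma_mul s t = [:: (e, c)] ->
  exists e1 c1 e2 c2, [/\ s = [:: (e1, c1)], t = [:: (e2, c2)] & e = e1 + e2].
Proof.
move=> cs ct H.
have c0 : c != 0.
  have := @canon_nz F [:: (e, c)] (e, c); apply; [rewrite -H; exact: canon_norm | exact: mem_head].
have He : coefs (ma_mul s t) e = c by rewrite H coefs_mono eqxx.
have sn : map fst s != [::].
  apply/eqP => e0; move: He; case: s e0 {cs H} => // _.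
  by rewrite coefs_mul big_nil => /esym/eqP; rewrite (negbTE c0).
have tn : map fst t != [::].
  apply/eqP => e0; move: He; case: t e0 {ct H} => // _.
  rewrite coefs_mul big1 => [/esym/eqP|x _]; first by rewrite (negbTE c0).
  by rewrite /coefs big_nil mulr0.
have [l1 l1i Hl1] := ext_min sn.
have [h1 h1i Hh1] := ext_max sn.
have [l2 l2i Hl2] := ext_min tn.
have [h2 h2i Hh2] := ext_max tn.
have key : forall r, coefs (ma_mul s t) r != 0 -> e = r.
  by move=> r; rewrite H coefs_mono; case: (eqVneq e r) => // _; rewrite eqxx.
have E1 : e = l1 + l2.
  by apply: key; rewrite coef_lo // mulf_neq0 // coef_nz.
have E2 : e = h1 + h2.
  by apply: key; rewrite coef_hi // mulf_neq0 // coef_nz.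
have a1 := Hh1 _ l1i; have a2 := Hh2 _ l2i.
have e1 : l1 = h1 by lra.
have e2 : l2 = h2 by lra.
exists l1, (coefs s l1), l2, (coefs t l2); split => //.
  apply: mono_of => // [|y yi]; first by case: (s) sn.
  by apply: le_anti; rewrite Hl1 // e1 Hh1.
apply: mono_of => // [|y yi]; first by case: (t) tn.
by apply: le_anti; rewrite Hl2 // e2 Hh2.
Qed.

End Struct.

Section Mon.
Variable F : fieldType.
Variable M : rat -> Prop.
Hypothesis PM : puiseux_monoid M.
Implicit Types s t : seq (rat * F).

Notation PA := (@Defs.in_alg F M).
Notation UN := (is_unit PA (@ma_mul F) (ma_one F)).
Notation IRR := (is_irreducible PA (@ma_mul F) (ma_one F) (ma_zero F)).

Definition atom a := [/\ M a, a != 0 & forall b d, M b -> M d -> a = b + d -> b = 0 \/ d = 0].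

Lemma M0 : M 0. Proof. by case: PM. Qed.
Lemma MD a b : M a -> M b -> M (a + b). Proof. by case: PM => _ h _; apply: h. Qed.
Lemma Mge0 a : M a -> 0 <= a. Proof. by case: PM => _ _ h; apply: h. Qed.

Lemma P_mono e (c : F) : M e -> c != 0 -> PA [:: (e, c)].
Proof. by move=> Me c0; split; [exact: canon_mono| move=> x; rewrite inE => /eqP ->]. Qed.

Lemma P_mono_inv e (c : F) : PA [:: (e, c)] -> M e /\ c != 0.
Proof.
case=> cs H; split; first exact: (H (e, c) (mem_head _ _)).
exact: (@canon_nz F [:: (e, c)] (e, c) cs (mem_head _ _)).
Qed.

Lemma unit_mono u : UN u -> exists c, u = [:: (0, c)].
Proof.
case=> [[cu Hu] [v [[cv Hv] uv]]].
have [e1 [c1 [e2 [c2 [eu ev ee]]]]] := mulU cu cv uv.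
have m1 : M e1 by apply: (Hu (e1, c1)); rewrite eu mem_head.
have m2 : M e2 by apply: (Hv (e2, c2)); rewrite ev mem_head.
have := Mge0 m1; have := Mge0 m2 => h1 h2.
have e10 : e1 = 0 by lra.
by exists c1; rewrite eu e10.
Qed.

Lemma unit0 (c : F) : c != 0 -> UN [:: (0, c)].
Proof.
move=> c0; split; first exact: P_mono M0 c0.
exists [:: (0, c^-1)]; split; first by apply: P_mono M0 _; rewrite invr_eq0.
rewrite mul_mono; first by rewrite mulfV // addr0. by rewrite mulfV // oner_neq0.
Qed.

Lemma irr_atom e c : IRR [:: (e, c)] -> atom e.
Proof.
case=> Pe _ nu H; have [Me c0] := P_mono_inv Pe.
split => //.
  by apply/eqP => e0; apply: nu; rewrite e0; apply: unit0.
move=> b d Mb Md ebd.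
have := H [:: (b, c)] [:: (d, 1)] (P_mono Mb c0) (P_mono Md (oner_neq0 _)).
rewrite mul_mono ?mulr1 -?ebd // => /(_ erefl) [/unit_mono[c' [-> _]]|/unit_mono[c' [-> _]]];
  by [left|right].
Qed.

Lemma atom_irr e : atom e -> IRR [:: (e, 1)].
Proof.
case=> Me e0 H; split.
- exact: P_mono Me (oner_neq0 _).
- by [].
- by move/unit_mono => [c [e00 _]]; rewrite e00 eqxx in e0.
move=> b d [cb Hb] [cd Hd] ebd.
have [e1 [c1 [e2 [c2 [eb ed ee]]]]] := mulU cb cd (esym ebd).
have m1 : M e1 by apply: (Hb (e1, c1)); rewrite eb mem_head.
have m2 : M e2 by apply: (Hd (e2, c2)); rewrite ed mem_head.
have nb : c1 != 0 by apply: (@canon_nz F b (e1, c1) cb); rewrite eb mem_head.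
have nd : c2 != 0 by apply: (@canon_nz F d (e2, c2) cd); rewrite ed mem_head.
case: (H e1 e2 m1 m2 ee) => [z|z]; [left; rewrite eb z | right; rewrite ed z];
  exact: unit0.
Qed.

Definition expo (x : seq (rat * F)) := (nth (0, 0) x 0).1.

Lemma prodl_mono l e c : (forall x, List.In x l -> canonical_terms x) ->
  prodl (@ma_mul F) (ma_one F) l = [:: (e, c)] ->
  (forall x, List.In x l -> exists e' c', x = [:: (e', c')]) /\
  e = \sum_(x <- l) expo x.
Proof.
elim: l e c => [|x l IH] e c Hc /=.
  by case=> <- _; split => //; rewrite big_nil.
move=> H.
have cl : canonical_terms (prodl (@ma_mul F) (ma_one F) l).
  by case: (l) => [|y l'] /=; [exact: canon_one | exact: canon_norm].
have [e1 [c1 [e2 [c2 [ex el ee]]]]] := mulU (Hc x (or_introl erefl)) cl H.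
have [IH1 IH2] := IH e2 c2 (fun y h => Hc y (or_intror h)) el.
split.
  by move=> y [<-|/IH1 //]; exists e1, c1.
by rewrite big_cons -IH2 ex ee.
Qed.


Lemma in_In (T : eqType) (x : T) (s : seq T) : x \in s -> List.In x s.
Proof. elim: s => // y s IH; rewrite inE => /orP[/eqP ->|/IH]; by [left|right]. Qed.

Lemma irr_canon x : IRR x -> canonical_terms x.
Proof. by case=> [[c _] _ _ _]. Qed.

Lemma decomp (HF : alg_half_factorial F M) m : M m ->
  exists l : seq rat, (forall a, a \in l -> atom a) /\ m = \sum_(a <- l) a.
Proof.
move=> Mm; have [m0|m0] := eqVneq m 0.
  by exists [::]; rewrite big_nil.
have [Hat _] := HF.
have [//||fl [Hfl efl]] := Hat [:: (m, 1)] (P_mono Mm (oner_neq0 _)).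
  by move/unit_mono => [c [e _]]; rewrite e eqxx in m0.
have [H1 H2] := prodl_mono (fun x h => irr_canon (Hfl x h)) (esym efl).
exists (map expo fl); split; last by rewrite big_map.
move=> a /mapP[x xf ->]; have [e' [c' ex]] := H1 x (in_In xf).
have := irr_atom (c := c') (e := e'); rewrite -ex => /(_ (Hfl x (in_In xf))).
by rewrite ex.
Qed.

Lemma prodl_nseq e k :
  prodl (@ma_mul F) (ma_one F) (nseq k [:: (e, 1)]) = [:: (k%:R * e, 1)].
Proof.
elim: k => [|k IH] /=; first by rewrite mul0r.
rewrite IH mul_mono ?mulr1 ?oner_neq0 //; congr [:: (_, _)].
by rewrite -addn1 natrD; ring.
Qed.

Lemma In_nseq (T : Type) (x y : T) k : List.In x (nseq k y) -> x = y.
Proof. by elim: k => //= k IH [->|/IH]. Qed.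

Lemma atom_uniq (HF : alg_half_factorial F M) a1 a2 : atom a1 -> atom a2 -> a1 = a2.
Proof.
move=> A1 A2.
have p1 : 0 < a1 by case: A1 => m n _; rewrite lt_def n Mge0.
have p2 : 0 < a2 by case: A2 => m n _; rewrite lt_def n Mge0.
set r := a1 / a2.
have rp : 0 < r by rewrite divr_gt0.
set k1 := `|denq r|%N; set k2 := `|numq r|%N.
have ek1 : (k1%:R : rat) = (denq r)%:~R by rewrite natr_absz gtr0_norm.
have ek2 : (k2%:R : rat) = (numq r)%:~R by rewrite natr_absz gtr0_norm // numq_gt0.
have E : k1%:R * a1 = k2%:R * a2.
  rewrite ek1 ek2 numqE /r; field; by rewrite gt_eqF.
have I1 : forall x, List.In x (nseq k1 [:: (a1, 1)]) -> IRR x.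
  by move=> x h; rewrite (In_nseq h); exact: atom_irr.
have I2 : forall x, List.In x (nseq k2 [:: (a2, 1)]) -> IRR x.
  by move=> x h; rewrite (In_nseq h); exact: atom_irr.
have := HF.2 _ _ I1 I2.
rewrite !prodl_nseq E !size_nseq => /(_ erefl) K.
have k1p : (k1%:R : rat) != 0 by rewrite ek1 intr_eq0 gt_eqF.
by apply: (mulfI k1p); rewrite E K.
Qed.


Lemma structure (HF : alg_half_factorial F M) : nontrivial_monoid M ->
  exists2 a, 0 < a & forall e, M e <-> exists k : nat, e = k%:R * a.
Proof.
case=> m [Mm m0]; have [l [Hl el]] := decomp HF Mm.
case: l Hl el => [|a l] Hl el; first by rewrite big_nil in el; rewrite el eqxx in m0.
have Aa : atom a := Hl a (mem_head _ _).
have ap : 0 < a by case: Aa => ma na _; rewrite lt_def na Mge0.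
exists a => // e; split.
  move=> Me; have [l' [Hl' el']] := decomp HF Me.
  exists (size l'); rewrite el'.
  elim: l' Hl' {el' Me} => [|b l' IH] H; first by rewrite big_nil mul0r.
  rewrite big_cons IH => [|x xl]; last by apply: H; rewrite inE xl orbT.
  rewrite (atom_uniq HF (H b (mem_head _ _)) Aa) /= -addn1 natrD; ring.
case=> k ->; elim: k => [|k IH]; first by rewrite mul0r; exact: M0.
by rewrite -addn1 natrD mulrDl mul1r; apply: MD => //; case: Aa.
Qed.

End Mon.

Section Iso.
Variable F : fieldType.
Implicit Types s t : seq (rat * F).

Lemma norm_fst s x : x \in normalize s -> x.1 \in map fst s.
Proof.
rewrite normE => /mapP[q]; rewrite mem_supp => h -> /=.
by apply: contraR h => h'; rewrite coefs_notin.
Qed.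

Lemma phi1_nat (p : {poly F}) x : x \in phi1 p -> isnat x.1.
Proof. by move/norm_fst/mapP => [y /LL_nat h ->]. Qed.

Lemma smap_in_alg (M : rat -> Prop) c d s : 0 < c -> canonical_terms s ->
  (forall x, x \in s -> exists k : nat, x.1 = k%:R * d) ->
  (forall k : nat, M (k%:R * (d * c))) -> Defs.in_alg M (smap c s).
Proof.
move=> cp cs H HM; split; first exact: canon_smap.
move=> x /mapP[y ys ->] /=; have [k ->] := H y ys; rewrite -mulrA; exact: HM.
Qed.

Lemma iso_poly (M : rat -> Prop) a : 0 < a ->
  (forall e, M e <-> exists k : nat, e = k%:R * a) ->
  poly_iso M (fun p : {poly F} => smap a (phi1 p)).
Proof.
move=> ap HM; have a0 : a != 0 by rewrite gt_eqF.
split; [|split; [|split; [|split; [|split; [|split]]]]].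
- move=> p; apply: (smap_in_alg (d := 1)) => //; first exact: canon_phi1.
    by move=> x /phi1_nat [k ->]; exists k; rewrite mulr1.
  by move=> k; apply/HM; exists k; rewrite mul1r.
- move=> p q e; apply: phi1_inj; apply: (smap_inj a0) => //; exact: canon_phi1.
- move=> s [cs Hs].
  have [p ep] : exists p, phi1 p = smap a^-1 s.
    apply: phi1_surj; first by apply: canon_smap; rewrite ?invr_gt0.
    move=> x /mapP[y ys ->] /=; have [k ->] := (HM _).1 (Hs y ys).
    by exists k; rewrite mulfK.
  by exists p; rewrite ep smapK.
- by move=> p q; rewrite phi1_add smap_add.
- by move=> p q; rewrite phi1_mul smap_mul.
- by rewrite phi1_one smap_one.
- by move=> c p; rewrite phi1_scale smap_scale.
Qed.

Lemma iso_alg (M M' : rat -> Prop) a b : 0 < a -> 0 < b ->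
  (forall e, M e <-> exists k : nat, e = k%:R * a) ->
  (forall e, M' e <-> exists k : nat, e = k%:R * b) ->
  alg_iso M M' (smap (F := F) (b / a)).
Proof.
move=> ap bp HM HM'.
have cp : 0 < b / a by rewrite divr_gt0.
have c0 : b / a != 0 by rewrite gt_eqF.
have a0 : a != 0 by rewrite gt_eqF.
split; [|split; [|split; [|split; [|split; [|split]]]]].
- move=> s [cs Hs]; apply: (smap_in_alg (d := a)) => //.
    by move=> x /Hs /HM.
  by move=> k; apply/HM'; exists k; rewrite [a * _]mulrC divfK.
- by move=> s t [cs _] [ct _]; apply: smap_inj.
- move=> t [ct Ht]; exists (smap (b / a)^-1 t); split; last exact: smapK.
  apply: (smap_in_alg (d := b)); rewrite ?invr_gt0 //.
    by move=> x /Ht /HM'.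
  move=> k; apply/HM; exists k; rewrite invf_div [b * _]mulrC divfK //.
  by rewrite gt_eqF.
- by move=> s t _ _; rewrite smap_add.
- by move=> s t _ _; rewrite smap_mul.
- exact: smap_one.
- by move=> c s _; rewrite smap_scale.
Qed.

End Iso.

Unset Implicit Arguments.
Theorem mainTheorem9 (F : fieldType) (M M' : rat -> Prop) :
  puiseux_monoid M -> nontrivial_monoid M ->
  puiseux_monoid M' -> nontrivial_monoid M' ->
  alg_half_factorial F M -> alg_half_factorial F M' ->
  [/\ (exists psi, @alg_iso F M M' psi),
      (exists phi, @poly_iso F M phi) &
      (exists phi', @poly_iso F M' phi')].
Proof.
move=> PM NM PM' NM' HF HF'.
have [a ap HM] := structure PM HF NM.
have [b bp HM'] := structure PM' HF' NM'.
split.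
- by exists (smap (b / a)); apply: iso_alg.
- by exists (fun p => smap a (phi1 p)); apply: iso_poly.
- by exists (fun p => smap b (phi1 p)); apply: iso_poly.
Qed.
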